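(* Let $D\subseteq\mathbb{Z}$, let $\ell\ge0$, $c>0$, and let $f:D\to\mathbb{Z}$ satisfy $f(j)-f(i)\ge c(j-i)$ for all $i,j\in D$ with $j\ge i+\ell$. Let $T$ be a $D$-valued random variable with $\mathbb{E}|f(T)|^r<+\infty$, where $r\ge1$. Then \[ \mathbb{M}_r(f(T))\ge\left(\frac{c}{2}\right)^r\left(\mathbb{M}_r(T)-\ell^r\right), \] where $\mathbb{M}_r(U):=\mathbb{E}|U-\mathbb{E}U|^r$. *)

(* Defs.v *)
From HB Require Import structures.
From mathcomp Require Import all_boot all_order all_algebra.
From mathcomp Require Import all_classical all_reals all_analysis.
Set Implicit Arguments. Unset Strict Implicit. Unset Printing Implicit Defensive.
Import Order.TTheory GRing.Theory Num.Theory.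
Local Open Scope ring_scope.
Local Open Scope ereal_scope.

Definition central_moment {d} {Omega : measurableType d} {R : realType}
  (P : probability Omega R) (r : R) (U : Omega -> R) : \bar R :=
  'E_P[(fun w => (`|U w - fine 'E_P[U]| `^ r)%R)].

(* Main.v *)
Require Import Defs.
From HB Require Import structures.
From mathcomp Require Import all_boot all_order all_algebra.
From mathcomp Require Import all_classical all_reals all_analysis.
From mathcomp Require Import measurable_realfun lra ring.
Import Order.TTheory GRing.Theory Num.Theory.
Local Open Scope ring_scope.
Local Open Scope ereal_scope.

Section Helpers.
Local Open Scope classical_set_scope.
Local Open Scope ring_scope.
Local Open Scope ereal_scope.

Lemma mfun_int d (Om : measurableType d) (R : realType) d' (Y : measurableType d')
  (T : Om -> int) (G : int -> Y) :
  measurable_fun setT (fun w => (T w)%:~R : R) -> measurable_fun setT (fun w => G (T w)).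
Proof.
move=> mT _ B mB.
have -> : setT `&` (fun w => G (T w)) @^-1` B = \bigcup_(k : int)
   (if pselect (B (G k)) then setT `&` (fun w => (T w)%:~R : R) @^-1` [set (k%:~R : R)]
    else set0).
  apply/seteqP; split => [w /= [_ Bw]|w [k _]].
    exists (T w) => //; case: pselect => //= _; split => //.
  case: pselect => //= Bk [_ /= /eqP]; rewrite eqr_int => /eqP ->; by split.
apply: countable_bigcupT_measurable => [|k]; first exact: countableP.
case: (pselect (B (G k))) => Hk; last exact: measurable0.
by apply: mT => //; exact: measurable_set1.
Qed.


Lemma key_pow d (Om : measurableType d) (R : realType) (P : probability Om R)
  (Y : Om -> R) (r : R) : (1 <= r)%R -> measurable_fun setT Y ->
  (\int[P]_w `|(Y w)%:E|) `^ r <= \int[P]_w (`|Y w| `^ r)%:E.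
Proof.
move=> r1 mY.
have r0 : (0 < r)%R by rewrite (lt_le_trans ltr01).
have [->|r1'] := eqVneq r 1%R.
  rewrite poweRe1; last by apply: integral_ge0.
  by under [X in _ <= X]eq_integral do rewrite powRr1//.
have r1s : (1 < r)%R by rewrite lt_neqAle eq_sym r1' r1.
pose q := (1 - r^-1)^-1%R.
have q0 : (0 < q)%R.
  by rewrite /q invr_gt0 subr_gt0 invf_lt1.
have rq : (r^-1 + q^-1 = 1)%R by rewrite /q invrK addrC subrK.
have := @hoelder _ _ _ P Y (cst 1%R) r q mY (measurable_cst _) r0 q0 rq.
have -> : (EFin \o cst 1%R) = (cst 1 : Om -> \bar R) by [].
rewrite Lnorm_cst1.
rewrite [X in _ * X](_ : _ = 1); last first.
  by rewrite [X in X `^ _](_ : _ = 1%E) ?poweR1r//; exact: probability_setT.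
rewrite mule1 Lnorm1.
under eq_integral do rewrite /= mulr1.
move=> H.
apply: (le_trans (gt0_ler_poweR (ltW r0) _ _ H)).
- by rewrite in_itv /= leey andbT; apply: integral_ge0.
- by rewrite in_itv /= Lnorm_ge0 leey.
rewrite powR_Lnorm ?gt_eqF //.
Qed.

Lemma jensen_pow d (Om : measurableType d) (R : realType) (P : probability Om R)
  (X : Om -> R) (a r : R) : (1 <= r)%R -> measurable_fun setT X ->
  ((`|a - fine 'E_P[X]| `^ r)%:E <= \int[P]_w (`|a - X w| `^ r)%:E).
Proof.
move=> r1 mX.
have r0 : (0 < r)%R by rewrite (lt_le_trans ltr01).
pose Y := fun w => (a - X w)%R.
have mY : measurable_fun setT Y by apply: measurable_funB => //; exact: measurable_cst.
have K := @key_pow _ _ _ P Y r r1 mY.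
have [->|fin] := eqVneq (\int[P]_w (`|a - X w| `^ r)%:E) +oo; first by rewrite leey.
have finY : \int[P]_w `|(Y w)%:E| < +oo.
  apply: (@lty_poweRy _ _ r); first by rewrite gt_eqF.
  by apply: (le_lt_trans K); rewrite ltey.
have intY : P.-integrable setT (EFin \o Y).
  by apply/integrableP; split => //; exact/measurable_EFinP.
have intA : P.-integrable setT (EFin \o cst a) by exact: finite_measure_integrable_cst.
have EX : 'E_P[X] = a%:E - \int[P]_w (Y w)%:E.
  rewrite unlock.
  transitivity (\int[P]_w ((cst a w)%:E - (Y w)%:E)).
    by apply: eq_integral => w _; rewrite /Y /= -EFinB opprB addrC subrK.
  rewrite (integralB_EFin _ intA intY) //.
  congr (_ - _); rewrite (_ : \int[P]_x (cst a x)%:E = \int[P]_x (cst a%:E) x) // integral_cst //.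
  by rewrite [X in _ * X](_ : _ = 1%E) ?mule1 //; exact: probability_setT.
have fY : \int[P]_w (Y w)%:E \is a fin_num by exact: (integrable_fin_num _ intY).
have fA : \int[P]_w `|(Y w)%:E| \is a fin_num.
  by rewrite ge0_fin_numE // integral_ge0.
rewrite EX -(fineK fY) -EFinB /= opprB addrC subrK.
apply: le_trans K; rewrite -(fineK fA) poweR_EFin lee_fin.
apply: ge0_ler_powR; rewrite ?nnegrE ?fine_ge0 ?integral_ge0 //; first exact: ltW.
rewrite -lee_fin (fineK fA) -abse_EFin (fineK fY).
apply: (le_abse_integral _ measurableT); exact/measurable_EFinP.
Qed.

Local Open Scope ring_scope.
Lemma half_convex (R : realType) (u v p : R) : 1 <= p ->
  `| 2^-1 * u + 2^-1 * v | `^ p <= 2^-1 * `| u | `^ p + 2^-1 * `| v | `^ p.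
Proof.
move=> p1; rewrite (@le_trans _ _ ((2^-1 * `| u | + 2^-1 * `| v |) `^ p))//.
  rewrite ge0_ler_powR ?nnegrE ?(le_trans _ p1)//.
  by rewrite (le_trans (ler_normD _ _))// 2!normrM ger0_norm.
rewrite {2 4}(_ : 2^-1 = 1 - 2^-1); last by rewrite {2}(splitr 1) div1r addrK.
by apply: (convex_powR p1 (Itv01 _ _)) => //=;
  rewrite ?inE/= ?in_itv/= ?normr_ge0// ?invr_ge0// invf_le1 ?ler1n.
Qed.

Lemma pow_tri (R : realType) (x y b r : R) : 1 <= r ->
  `|x - y| `^ r <= 2 `^ r * (2^-1 * `|x - b| `^ r + 2^-1 * `|y - b| `^ r).
Proof.
move=> r1.
have -> : x - y = 2 * (2^-1 * (x - b) + 2^-1 * (b - y)).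
  by rewrite mulrDr !mulrA divff ?pnatr_eq0 // !mul1r addrA subrK.
rewrite normrM ger0_norm // powRM //.
rewrite ler_wpM2l ?powR_ge0 //.
by rewrite (distrC y b); exact: half_convex.
Qed.

Lemma growth_pow (R : realType) (D : set int) (ell c r : R) (f : int -> int) (i j : int) :
  (0 <= ell) -> (0 < c) -> (1 <= r) ->
  (forall i j : int, D i -> D j -> (i%:~R + ell <= (j%:~R : R)) ->
     (c * (j - i)%:~R <= (f j - f i)%:~R)) -> D i -> D j ->
  c `^ r * `|j%:~R - i%:~R| `^ r <= `|(f j)%:~R - (f i)%:~R| `^ r + c `^ r * ell `^ r.
Proof.
move=> ell0 c0 r1 H Di Dj.
have r0 : 0 <= r by rewrite (le_trans _ r1).
have [le|lt] := lerP ell `|j%:~R - i%:~R|; last first.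
  rewrite -[leLHS]add0r lerD ?powR_ge0 // ler_wpM2l ?powR_ge0 //.
  by apply: ge0_ler_powR; rewrite ?nnegrE // ltW.
suff : c * `|j%:~R - i%:~R| <= `|(f j)%:~R - (f i)%:~R| :> R.
  move=> h; rewrite -(powRM _ (ltW c0) (normr_ge0 _)).
  rewrite -[leLHS]addr0 lerD ?mulr_ge0 ?powR_ge0 //.
  by apply: ge0_ler_powR; rewrite ?nnegrE ?mulr_ge0 // ltW.
have [ij|ji] := lerP (i%:~R : R) j%:~R.
  apply: (le_trans _ (ler_norm _)); rewrite -!intrB; apply: H => //.
  by move: le; rewrite ger0_norm ?subr_ge0 //; lra.
rewrite distrC.
apply: (le_trans _ (ler_norm _)); rewrite -!intrB; apply: H => //.
by move: le; rewrite ler0_norm ?subr_le0 ?(ltW ji) //; lra.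
Qed.

Local Open Scope ereal_scope.

Lemma int_affine d (Om : measurableType d) (R : realType) (P : probability Om R)
  (phi : Om -> \bar R) (al be : R) : measurable_fun setT phi ->
  (forall w, 0 <= phi w) -> (0 <= al)%R -> (0 <= be)%R ->
  \int[P]_w (al%:E * phi w + be%:E) = al%:E * \int[P]_w phi w + be%:E.
Proof.
move=> mphi phi0 al0 be0.
rewrite ge0_integralD //; last 2 first.
- by move=> w _; rewrite mule_ge0.
- exact: measurable_funeM.
rewrite ge0_integralZl_EFin //.
congr (_ + _); rewrite (_ : \int[P]_x be%:E = \int[P]_x (cst be%:E) x) // integral_cst //.
by rewrite [X in _ * X](_ : _ = 1%E) ?mule1 //; exact: probability_setT.
Qed.

Lemma final_real (R : realType) (A Q S x y L : R) : (0 <= Q)%R -> (Q * S = 1)%R ->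
  (A * x <= S / 2 * y + S / 2 * y + A * L)%R -> (A * Q * (x - L) <= y)%R.
Proof.
move=> Q0 QS H.
have H2 := ler_wpM2l Q0 H.
have E : (Q * (S / 2 * y + S / 2 * y + A * L) = y + Q * (A * L))%R.
  by rewrite -mulrDl -splitr mulrDr mulrA QS mul1r.
rewrite E in H2.
have -> : (A * Q * (x - L) = Q * (A * x) - Q * (A * L))%R by ring.
lra.
Qed.

End Helpers.

Local Open Scope ring_scope.
Local Open Scope ereal_scope.

Theorem lemma2p2 (R : realType) (d : measure_display) (Omega : measurableType d)
  (P : probability Omega R) (D : set int) (ell c r : R) (f : int -> int)
  (T : Omega -> int) :
  (0 <= ell)%R -> (0 < c)%R -> (1 <= r)%R ->
  (forall i j : int, D i -> D j -> (i%:~R + ell <= (j%:~R : R))%R ->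
     (c * (j - i)%:~R <= (f j - f i)%:~R)%R) ->
  (forall w, D (T w)) ->
  measurable_fun setT (fun w => ((T w)%:~R : R)) ->
  'E_P[(fun w => (`|((f (T w))%:~R : R)| `^ r)%R)] < +oo ->
  central_moment P r (fun w => (f (T w))%:~R) >=
    ((c / 2) `^ r)%:E * (central_moment P r (fun w => (T w)%:~R) - (ell `^ r)%:E).
Proof.
move=> ell0 c0 r1 Hf DT mT _.
have r0 : (0 < r)%R by rewrite (lt_le_trans ltr01).
have mG : forall G : int -> \bar R, measurable_fun setT (fun w => G (T w)).
  by move=> G; exact: mfun_int mT.
rewrite /central_moment.
set b := fine 'E_P[fun w => ((f (T w))%:~R : R)].
set m := fine 'E_P[fun w => ((T w)%:~R : R)].
rewrite !unlock.
set Mt := \int[P]_w _.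
set Mf := \int[P]_w _.
have Mf0 : 0 <= Mf by apply: integral_ge0 => w _; rewrite lee_fin powR_ge0.
have Mt0 : 0 <= Mt by apply: integral_ge0 => w _; rewrite lee_fin powR_ge0.
have [->|Mfoo] := eqVneq Mf +oo; first by rewrite leey.
have Mffin : Mf \is a fin_num by rewrite ge0_fin_numE // ltey.
pose h k := \int[P]_w (`|((f k)%:~R : R) - (f (T w))%:~R| `^ r)%:E.
pose g k := \int[P]_w (`|(k%:~R : R) - (T w)%:~R| `^ r)%:E.
pose a2 := (2 `^ r * 2^-1)%R.
have a20 : (0 <= a2)%R by rewrite mulr_ge0 ?powR_ge0.
have h0 k : 0 <= h k by apply: integral_ge0 => w _; rewrite lee_fin powR_ge0.
have g0 k : 0 <= g k by apply: integral_ge0 => w _; rewrite lee_fin powR_ge0.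
have stepA k : h k <= a2%:E * Mf + (a2 * `|(f k)%:~R - b| `^ r)%:E.
  rewrite -(@int_affine _ _ _ P _ a2 _ (mG (fun j => (`|(f j)%:~R - b| `^ r)%:E))) //; last first.
    by rewrite mulr_ge0 ?powR_ge0.
  apply: ge0_le_integral => //.
  - exact: (mG (fun j => (`|((f k)%:~R : R) - (f j)%:~R| `^ r)%:E)).
  - exact: (mG (fun j => (a2%:E * (`|(f j)%:~R - b| `^ r)%:E + (a2 * `|(f k)%:~R - b| `^ r)%:E))).
  move=> w _; rewrite -EFinM -EFinD lee_fin.
  apply: (le_trans (@pow_tri _ _ _ b r r1)).
  by rewrite /a2 mulrDr !mulrA addrC.
have Mfr : Mf = (fine Mf)%:E by rewrite fineK.
have stepAA : \int[P]_w h (T w) <= a2%:E * Mf + (a2 * fine Mf)%:E.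
  rewrite -(@int_affine _ _ _ P _ a2 (a2 * fine Mf)%R (mG (fun j => (`|(f j)%:~R - b| `^ r)%:E))) //; last first.
    by rewrite mulr_ge0 // fine_ge0.
  apply: ge0_le_integral => //.
  - exact: (mG (fun j => a2%:E * (`|(f j)%:~R - b| `^ r)%:E + (a2 * fine Mf)%:E)).
  move=> w _; apply: (le_trans (stepA (T w))).
  by rewrite Mfr -!EFinM -!EFinD lee_fin addrC.
have stepB k : D k -> (c `^ r)%:E * g k <= h k + (c `^ r * ell `^ r)%:E.
  move=> Dk.
  rewrite /g -ge0_integralZl_EFin //; last 2 first.
  - exact: (mG (fun j => (`|(k%:~R : R) - j%:~R| `^ r)%:E)).
  - exact: powR_ge0.
  rewrite -[h k]mul1e /h -(@int_affine _ _ _ P _ 1 (c `^ r * ell `^ r)%R (mG (fun j => (`|((f k)%:~R : R) - (f j)%:~R| `^ r)%:E))) //.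
  apply: ge0_le_integral => //.
  - by move=> w _; rewrite -EFinM lee_fin mulr_ge0 ?powR_ge0.
  - exact: (mG (fun j => (c `^ r)%:E * (`|(k%:~R : R) - j%:~R| `^ r)%:E)).
  - exact: (mG (fun j => 1%:E * (`|((f k)%:~R : R) - (f j)%:~R| `^ r)%:E + (c `^ r * ell `^ r)%:E)).
  move=> w _; rewrite mul1e -EFinM -EFinD lee_fin.
  exact: (@growth_pow _ D ell c r f (T w) k ell0 c0 r1 Hf (DT w) Dk).
  by rewrite mulr_ge0 ?powR_ge0.
have stepBB : (c `^ r)%:E * \int[P]_w g (T w) <= \int[P]_w h (T w) + (c `^ r * ell `^ r)%:E.
  rewrite -(@ge0_integralZl_EFin _ _ _ P setT measurableT (fun w => g (T w))).
  4: exact: powR_ge0.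
  3: exact: (mG g).
  2: by move=> w _; exact: g0.
  have -> : \int[P]_w h (T w) + (c `^ r * ell `^ r)%:E =
     \int[P]_w (1%:E * h (T w) + (c `^ r * ell `^ r)%:E).
    rewrite (@int_affine _ _ _ P (fun w => h (T w)) 1 _ (mG h)) ?mul1e //.
    by rewrite mulr_ge0 ?powR_ge0.
  apply: (@ge0_le_integral _ _ _ P _ measurableT (fun x => (c `^ r)%:E * g (T x))
    (fun w => 1 * h (T w) + (c `^ r * ell `^ r)%:E)).
  - by move=> w _; apply: mule_ge0; [rewrite lee_fin powR_ge0 | exact: g0].
  - exact: (mG (fun j => (c `^ r)%:E * g j)).
  - exact: (mG (fun j => 1 * h j + (c `^ r * ell `^ r)%:E)).
  by move=> w _; rewrite mul1e; exact: stepB.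
have stepC : Mt <= \int[P]_w g (T w).
  apply: (@ge0_le_integral _ _ _ P _ measurableT (fun w => (`|((T w)%:~R : R) - m| `^ r)%:E)
    (fun w => g (T w))).
  - by move=> w _; rewrite lee_fin powR_ge0.
  - exact: (mG (fun j => (`|(j%:~R : R) - m| `^ r)%:E)).
  - exact: (mG g).
  move=> w _; exact: (@jensen_pow _ _ _ P (fun w => (T w)%:~R) (T w)%:~R r r1 mT).
have key : (c `^ r)%:E * Mt <= a2%:E * Mf + (a2 * fine Mf)%:E + (c `^ r * ell `^ r)%:E.
  apply: (le_trans (lee_wpmul2l _ stepC)); first by rewrite lee_fin powR_ge0.
  apply: (le_trans stepBB); exact: leeD2r stepAA.
have cr0 : (0 < c `^ r)%R by rewrite powR_gt0.
have Mtfin : Mt \is a fin_num.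
  rewrite ge0_fin_numE // ltey; apply/eqP => Mtoo.
  move: key; rewrite Mtoo [_ * +oo]muleC gt0_mulye ?lte_fin // Mfr -!EFinM -!EFinD.
  by rewrite leye_eq.
have Mtr : Mt = (fine Mt)%:E by rewrite fineK.
move: key; rewrite Mfr Mtr -!EFinM -!EFinD lee_fin => key.
rewrite lee_fin.
have e1 : ((c / 2) `^ r = c `^ r * (2^-1) `^ r)%R by rewrite powRM ?ltW.
have e2 : ((2^-1) `^ r * 2 `^ r = 1 :> R)%R.
  by rewrite -powRM // mulVf // powR1.
have Q0 : (0 <= (2^-1 : R) `^ r)%R by exact: powR_ge0.
rewrite e1; move: key; rewrite /a2.
rewrite /= => key.
exact: (@final_real _ _ _ _ _ _ _ Q0 e2 key).
Qed.
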